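(* Let $\lambda>1$ and $\Lambda>1$, and set $s=1/(\lambda-1)$. For $\nu>0$ and $\Lambda'\in\{1,\Lambda\}$ let $\xi_{\Lambda'}(\nu)$ be the unique positive real root of $\xi^{3}+(1+s)\nu\xi^{2}-\Lambda'\xi-s\nu\Lambda'=0$, and define $$\tilde{\varepsilon}(\nu)=\frac{\frac{\nu}{\lambda-1}\left(\frac{\Lambda}{\xi_1(\nu)\xi_\Lambda(\nu)}+\lambda\right)+\xi_1(\nu)+\xi_\Lambda(\nu)}{\frac{\nu}{\lambda-1}\left(\Lambda+\frac{\Lambda}{\xi_1(\nu)\xi_\Lambda(\nu)}+\lambda-1\right)+\Lambda\xi_1(\nu)+\xi_\Lambda(\nu)}.$$ Then $$\tilde{\varepsilon}(\nu)=\frac{1}{\sqrt{\Lambda}}+\frac{\sqrt{\Lambda}-1}{2\Lambda}\,\nu+O(\nu^{2})\quad(\nu\to0),$$ and $$\tilde{\varepsilon}(\nu)=\frac{\lambda}{\sqrt{\Lambda}+\lambda-1}-\frac{(\lambda-1)^{2}(\sqrt{\Lambda}-1)(\sqrt{\Lambda}+2)}{2\nu\sqrt{\lambda}\,(\sqrt{\Lambda}+\lambda-1)^{2}}+O\!\left(\frac{1}{\nu^{2}}\right)\quad(\nu\to\infty).$$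
   Context: $\tilde{\varepsilon}(\nu)=\varepsilon/\varepsilon_c$ is the normalized applied strain as a function of the dimensionless crack velocity $\nu$ in a minimal viscoelastic (Zener-element) crack model, where $\lambda=E_\infty/E_0$ is the ratio of glassy to rubbery moduli and $\Lambda=L/l$ is the ratio of sheet height to lattice spacing. For $s,\nu,\Lambda'>0$ the cubic defining $\xi_{\Lambda'}$ has exactly one positive real root. *)

(* Defs.v *)
From Stdlib Require Import Reals.
Open Scope R_scope.

Definition xi_cubic (s Lp nu x : R) : R :=
  x ^ 3 + (1 + s) * nu * x ^ 2 - Lp * x - s * nu * Lp.

(* normalized strain, given the values x1 = xi_1(nu), xL = xi_Lambda(nu) *)
Definition eps_tilde (lam Lam x1 xL nu : R) : R :=
  (nu / (lam - 1) * (Lam / (x1 * xL) + lam) + x1 + xL) /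
  (nu / (lam - 1) * (Lam + Lam / (x1 * xL) + lam - 1) + Lam * x1 + xL).

(* Main.v *)
Require Import Defs.
From Stdlib Require Import Reals Lra Psatz.
Open Scope R_scope.

Definition Ev (P : R -> Prop) := exists d, 0 < d /\ forall x, 0 < x < d -> P x.
Definition Bd (f : R -> R) := exists C, Ev (fun x => Rabs (f x) <= C).

Lemma Ev_and (P Q : R -> Prop) : Ev P -> Ev Q -> Ev (fun x => P x /\ Q x).
Proof.
  intros [d1 [H1 P1]] [d2 [H2 Q1]]. exists (Rmin d1 d2). split.
  - apply Rmin_pos; auto.
  - intros x [Hx Hx']. pose proof (Rmin_l d1 d2). pose proof (Rmin_r d1 d2).
    split; [apply P1|apply Q1]; split; lra.
Qed.

Lemma Ev_mono (P Q : R -> Prop) : (forall x, 0 < x -> P x -> Q x) -> Ev P -> Ev Q.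
Proof. intros H [d [Hd HP]]. exists d. split; auto. intros x Hx. apply H; [lra|]. auto. Qed.

Lemma Ev_all (P : R -> Prop) : (forall x, 0 < x -> P x) -> Ev P.
Proof. intros H. exists 1. split; [lra|]. intros x Hx; apply H; lra. Qed.

Lemma Bd_const (c : R) : Bd (fun _ => c).
Proof. exists (Rabs c). apply Ev_all. intros; lra. Qed.

Lemma Bd_id : Bd (fun x => x).
Proof. exists 1. exists 1. split; [lra|]. intros x Hx. rewrite Rabs_pos_eq; lra. Qed.

Lemma Bd_plus f g : Bd f -> Bd g -> Bd (fun x => f x + g x).
Proof.
  intros [C1 H1] [C2 H2]. exists (C1 + C2).
  apply (Ev_mono _ _ (fun x _ H => Rle_trans _ _ _ (Rabs_triang (f x) (g x)) (Rplus_le_compat _ _ _ _ (proj1 H) (proj2 H)))).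
  apply Ev_and; auto.
Qed.

Lemma Bd_opp f : Bd f -> Bd (fun x => - f x).
Proof. intros [C H]. exists C. revert H. apply Ev_mono. intros x _ H. rewrite Rabs_Ropp. auto. Qed.

Lemma Bd_minus f g : Bd f -> Bd g -> Bd (fun x => f x - g x).
Proof. intros H1 H2. unfold Rminus. apply (Bd_plus f (fun x => - g x)); auto. apply Bd_opp; auto. Qed.

Lemma Bd_mult f g : Bd f -> Bd g -> Bd (fun x => f x * g x).
Proof.
  intros [C1 H1] [C2 H2]. exists (C1 * C2).
  apply (Ev_mono (fun x => Rabs (f x) <= C1 /\ Rabs (g x) <= C2)).
  - intros x _ [A B]. rewrite Rabs_mult.
    apply Rmult_le_compat; auto using Rabs_pos.
  - apply Ev_and; auto.
Qed.

Lemma Bd_divc f c : Bd f -> Bd (fun x => f x / c).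
Proof. intros H. unfold Rdiv. apply (Bd_mult f (fun _ => / c)); auto. apply Bd_const. Qed.

Lemma Bd_inv g c : 0 < c -> Ev (fun x => c <= Rabs (g x)) -> Bd (fun x => / g x).
Proof.
  intros Hc H. exists (/ c). revert H. apply Ev_mono. intros x _ H.
  rewrite Rabs_inv. apply Rinv_le_contravar; auto.
Qed.

Lemma Bd_div f g c : Bd f -> 0 < c -> Ev (fun x => c <= Rabs (g x)) -> Bd (fun x => f x / g x).
Proof. intros Hf Hc H. unfold Rdiv. apply (Bd_mult f (fun x => / g x)); auto. eapply Bd_inv; eauto. Qed.

Lemma Bd_ext f g : Bd f -> Ev (fun x => f x = g x) -> Bd g.
Proof.
  intros [C H1] H2. exists C. apply (Ev_mono (fun x => Rabs (f x) <= C /\ f x = g x)).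
  - intros x _ [A B]. rewrite <- B. auto.
  - apply Ev_and; auto.
Qed.

Ltac bd := first [ exact (Bd_const _) | exact Bd_id | assumption
  | (apply Bd_minus; [bd|bd]) | (apply Bd_plus; [bd|bd]) | (apply Bd_opp; bd)
  | (apply Bd_divc; bd) | (apply Bd_mult; [bd|bd]) ].

Lemma root_bounds m r nu x : 1 < m -> 0 < r -> 0 < nu -> 0 < x ->
  xi_cubic (1/(m*m-1)) (r*r) nu x = 0 -> r/m < x < r.
Proof.
  intros Hm Hr Hnu Hx Hc. unfold xi_cubic in Hc.
  set (s := 1/(m*m-1)) in *.
  assert (Hs : s * (m*m-1) = 1) by (unfold s; field; nra).
  assert (Hs0 : 0 < s) by (unfold s; unfold Rdiv; apply Rmult_lt_0_compat; [lra|apply Rinv_0_lt_compat; nra]).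
  assert (E : x*(x*x - r*r) = nu*(s*(r*r) - (1+s)*(x*x))) by (simpl in Hc; nra).
  assert (Hxr : x < r).
  { destruct (Rlt_or_le x r) as [h|h]; auto. exfalso.
    assert (r*r <= x*x) by nra.
    assert (0 <= x*(x*x-r*r)) by (apply Rmult_le_pos; nra).
    assert (0 < nu*((1+s)*(x*x) - s*(r*r))) by (apply Rmult_lt_0_compat; nra). nra. }
  split; auto.
  assert (x*x < r*r) by nra.
  assert (x*(x*x-r*r) < 0) by nra.
  assert (0 < (1+s)*(x*x) - s*(r*r)).
  { destruct (Rlt_or_le 0 ((1+s)*(x*x) - s*(r*r))) as [h|h]; auto.
    assert (nu*(s*(r*r) - (1+s)*(x*x)) >= 0) by (apply Rle_ge, Rmult_le_pos; lra). lra. }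
  assert (r*r < m*m*(x*x)).
  { replace (m*m) with (1 + 1/s) by (unfold s; field; nra).
    apply (Rmult_lt_reg_l s); [auto|].
    replace (s*((1+1/s)*(x*x))) with ((1+s)*(x*x)) by (field; lra). nra. }
  assert (r < m*x).
  { destruct (Rlt_or_le r (m*x)) as [h|h]; auto.
    assert (0 < m*x) by nra.
    assert ((m*x)*(m*x) <= r*r) by (apply Rmult_le_compat; lra). nra. }
  apply (Rmult_lt_reg_l m); [lra|]. replace (m*(r/m)) with r by (field; lra). lra.
Qed.


Lemma small_exp m r L xf : 1 < m -> 0 < r -> L = r*r ->
  (forall nu, 0 < nu -> 0 < xf nu /\ xi_cubic (1/(m*m-1)) L nu (xf nu) = 0) ->
  Bd (fun nu => (xf nu - r + nu/2)/(nu*nu)).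
Proof.
  intros Hm Hr HL Hroot. subst L.
  set (s := 1/(m*m-1)).
  assert (Hbd : forall nu, 0 < nu -> r/m < xf nu < r).
  { intros nu Hnu. destruct (Hroot nu Hnu). apply (root_bounds m r nu); auto. }
  assert (Hrm : 0 < r/m) by (unfold Rdiv; apply Rmult_lt_0_compat; [lra|apply Rinv_0_lt_compat; lra]).
  assert (Hx : Bd xf).
  { exists r. apply Ev_all. intros nu Hnu. specialize (Hbd nu Hnu). rewrite Rabs_pos_eq; lra. }
  assert (Hinv : Bd (fun nu => / (xf nu * (xf nu + r)))).
  { apply (Bd_inv _ (r/m * r)). nra. apply Ev_all. intros nu Hnu. specialize (Hbd nu Hnu).
    rewrite Rabs_pos_eq; [|nra]. apply Rmult_le_compat; lra. }
  apply (Bd_ext (fun nu => -((1+s)*(xf nu*xf nu) - s*(r*r)) * (-(1+2*s)*xf nu - 2*s*r) / 2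
      * / (xf nu * (xf nu + r)) * / (xf nu * (xf nu + r)))).
  - bd.
  - apply Ev_all. intros nu Hnu. specialize (Hbd nu Hnu). destruct (Hroot nu Hnu) as [_ Hc].
    set (x := xf nu) in *.
    assert (Hx0 : x <> 0) by lra. assert (Hxr : x + r <> 0) by lra.
    assert (K : (x - r + nu/2) - nu*nu*(-((1+s)*(x*x) - s*(r*r)) * (-(1+2*s)*x - 2*s*r) / 2
      * / (x * (x + r)) * / (x * (x + r))) =
      xi_cubic s (r*r) nu x * (2*x*(x+r) + nu*(-(1+2*s)*x - 2*s*r)) / (2*(x*(x+r))*(x*(x+r)))).
    { unfold xi_cubic. field. auto. }
    fold s in Hc. rewrite Hc in K. unfold Rdiv in K at 3. rewrite !Rmult_0_l in K.
    assert (K2 : x - r + nu/2 = nu*nu*(-((1+s)*(x*x) - s*(r*r)) * (-(1+2*s)*x - 2*s*r) / 2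
      * / (x * (x + r)) * / (x * (x + r)))) by lra.
    assert (Hs0 : 0 < s) by (unfold s; unfold Rdiv; apply Rmult_lt_0_compat; [lra|apply Rinv_0_lt_compat; nra]).
    rewrite K2. field. repeat split; lra.
Qed.

Lemma large_exp m r L xf : 1 < m -> 0 < r -> L = r*r ->
  (forall nu, 0 < nu -> 0 < xf nu /\ xi_cubic (1/(m*m-1)) L nu (xf nu) = 0) ->
  Bd (fun t => (xf (1/t) - r/m - r*r*((m*m-1)*(m*m-1))/(2*(m*m*(m*m))) * t)/(t*t)).
Proof.
  intros Hm Hr HL Hroot. subst L.
  set (s := 1/(m*m-1)).
  set (rho := r/m).
  assert (Hbd : forall t, 0 < t -> rho < xf (1/t) < r).
  { intros t Ht. assert (0 < 1/t) by (unfold Rdiv; rewrite Rmult_1_l; apply Rinv_0_lt_compat; lra).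
    destruct (Hroot (1/t)); auto. apply (root_bounds m r (1/t)); auto. }
  assert (Hrm : 0 < rho) by (unfold rho, Rdiv; apply Rmult_lt_0_compat; [lra|apply Rinv_0_lt_compat; lra]).
  assert (Hx : Bd (fun t => xf (1/t))).
  { exists r. apply Ev_all. intros t Ht. specialize (Hbd t Ht). rewrite Rabs_pos_eq; lra. }
  assert (Hinv : Bd (fun t => / (xf (1/t) + rho))).
  { apply (Bd_inv _ rho). lra. apply Ev_all. intros t Ht. specialize (Hbd t Ht).
    rewrite Rabs_pos_eq; lra. }
  apply (Bd_ext (fun t => xf (1/t) * (xf (1/t) * xf (1/t) - r*r)
      * (2*rho*(xf (1/t)*xf (1/t)) + 2*rho*rho*xf (1/t) + rho*rho*rho - rho*(r*r))
      / ((1+s)*(1+s)*2*rho) * / (xf (1/t) + rho) * / (xf (1/t) + rho))).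
  - bd.
  - apply Ev_all. intros t Ht. specialize (Hbd t Ht).
    assert (Ht' : 0 < 1/t) by (unfold Rdiv; rewrite Rmult_1_l; apply Rinv_0_lt_compat; lra).
    destruct (Hroot (1/t) Ht') as [_ Hc].
    set (y := xf (1/t)) in *.
    assert (Hy : y + rho <> 0) by lra.
    assert (K : (y - rho - r*r*((m*m-1)*(m*m-1))/(2*(m*m*(m*m))) * t) - t*t*(y * (y * y - r*r)
      * (2*rho*(y*y) + 2*rho*rho*y + rho*rho*rho - rho*(r*r))
      / ((1+s)*(1+s)*2*rho) * / (y + rho) * / (y + rho)) =
      t * xi_cubic s (r*r) (1/t) y * (1/((1+s)*(y+rho)) - t*(2*rho*(y*y) + 2*rho*rho*y + rho*rho*rho - rho*(r*r))/((1+s)*(1+s)*2*rho*(y+rho)*(y+rho)))).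
    { unfold xi_cubic, s, rho. field. repeat split; try lra; try nra. }
    fold s in Hc. rewrite Hc in K. rewrite Rmult_0_r, Rmult_0_l in K.
    assert (K2 : y - rho - r*r*((m*m-1)*(m*m-1))/(2*(m*m*(m*m))) * t = t*t*(y * (y * y - r*r)
      * (2*rho*(y*y) + 2*rho*rho*y + rho*rho*rho - rho*(r*r))
      / ((1+s)*(1+s)*2*rho) * / (y + rho) * / (y + rho))) by lra.
    assert (Hs0 : 0 < s) by (unfold s; unfold Rdiv; apply Rmult_lt_0_compat; [lra|apply Rinv_0_lt_compat; nra]).
    rewrite K2. field. repeat split; lra.
Qed.

Definition Qs (m r t a b : R) : R := (-(1*r/(2)) + (1*r*r/(2)) + (1*r*r*r/(2)) + -(1*r*r*r*r/(2)) + (1*m*m*r/(2)) + -(1*m*m*r*r/(2)) + -(1*m*m*r*r*r/(2)) + (1*m*m*r*r*r*r/(2)) + (2*b*r*r) + -(2*b*r*r*r) + -(2*b*m*m*r*r) + (2*b*m*m*r*r*r) + -(2*a*r*r*r) + (2*a*r*r*r*r) + (2*a*m*m*r*r*r) + -(2*a*m*m*r*r*r*r) + (1*t/(4)) + -(1*t*r*r/(2)) + -(1*t*r*r*r/(2)) + (3*t*r*r*r*r/(4)) + -(1*t*m*m/(4)) + (1*t*m*m*r*r/(2)) + -(1*t*m*m*r*r*r*r/(4)) + -(2*t*b*r) + (3*t*b*r*r) + -(1*t*b*r*r*r) + (2*t*b*m*m*r) + -(1*t*b*m*m*r*r) + -(1*t*b*m*m*r*r*r) + (1*t*a*r*r)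 + (1*t*a*r*r*r) + -(2*t*a*r*r*r*r) + -(1*t*a*m*m*r*r) + (1*t*a*m*m*r*r*r) + -(1*t*t/(8)) + (1*t*t*r/(8)) + (3*t*t*r*r/(8)) + -(3*t*t*r*r*r/(8)) + (1*t*t*m*m/(8)) + -(1*t*t*m*m*r/(8)) + -(1*t*t*m*m*r*r/(8)) + (1*t*t*m*m*r*r*r/(8)) + (1*t*t*b*r) + -(1*t*t*b*r*r/(2)) + -(1*t*t*b*r*r*r/(2)) + -(1*t*t*b*m*m*r) + (1*t*t*b*m*m*r*r/(2)) + (1*t*t*b*m*m*r*r*r/(2)) + (2*t*t*b*b*r) + -(2*t*t*b*b*r*r) + -(2*t*t*b*b*m*m*r) + (2*t*t*b*b*m*m*r*r) + -(1*t*t*a*r/(2)) + -(1*t*t*a*r*r/(2)) + (3*t*t*a*r*r*r) + -(2*t*t*a*r*r*r*r) + (1*t*t*a*m*m*r/(2)) + -(1*t*t*a*m*m*r*r/(2)) + -(1*t*t*a*m*m*r*r*r) + (1*t*t*a*m*m*r*r*r*r) + -(2*t*t*a*a*r*r*r) + (2*t*t*a*a*r*r*r*r) + (2*t*t*a*a*m*m*r*r*r) + -(2*t*t*a*a*m*m*r*r*r*r) + -(3*t*t*t*b*r*r/(4)) + (3*t*t*t*b*r*r*r/(4)) + (1*t*t*t*b*m*m*r*r/(4)) + -(1*t*t*t*b*m*m*r*r*r/(4)) + -(1*t*t*t*b*b) + (1*t*t*t*b*b*r*r) + (1*t*t*t*b*b*m*m) + -(1*t*t*t*b*b*m*m*r*r)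 + (1*t*t*t*a/(4)) + -(1*t*t*t*a*r/(4)) + -(1*t*t*t*a*r*r) + (1*t*t*t*a*r*r*r) + -(1*t*t*t*a*m*m/(4)) + (1*t*t*t*a*m*m*r/(4)) + (1*t*t*t*a*m*m*r*r/(2)) + -(1*t*t*t*a*m*m*r*r*r/(2)) + -(2*t*t*t*a*b*r) + (4*t*t*t*a*b*r*r) + -(2*t*t*t*a*b*r*r*r) + (2*t*t*t*a*b*m*m*r) + -(2*t*t*t*a*b*m*m*r*r) + (1*t*t*t*a*a*r*r) + -(2*t*t*t*a*a*r*r*r) + (1*t*t*t*a*a*r*r*r*r) + -(1*t*t*t*a*a*m*m*r*r) + (2*t*t*t*a*a*m*m*r*r*r) + -(1*t*t*t*a*a*m*m*r*r*r*r) + (1*t*t*t*t*b*b/(2)) + -(1*t*t*t*t*b*b*r/(2)) + -(1*t*t*t*t*b*b*m*m/(2)) + (1*t*t*t*t*b*b*m*m*r/(2)) + (2*t*t*t*t*a*b*r*r) + -(2*t*t*t*t*a*b*r*r*r) + -(1*t*t*t*t*a*b*m*m*r*r) + (1*t*t*t*t*a*b*m*m*r*r*r) + (2*t*t*t*t*a*b*b*r) + -(2*t*t*t*t*a*b*b*r*r) + -(2*t*t*t*t*a*b*b*m*m*r) + (2*t*t*t*t*a*b*b*m*m*r*r) + (1*t*t*t*t*a*a*r*r/(2)) + -(1*t*t*t*t*a*a*r*r*r/(2)) + -(1*t*t*t*t*a*a*m*m*r*r/(2)) + (1*t*t*t*t*a*a*m*m*r*r*r/(2)) + -(2*t*t*t*t*a*a*b*r*r)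 + (2*t*t*t*t*a*a*b*r*r*r) + (2*t*t*t*t*a*a*b*m*m*r*r) + -(2*t*t*t*t*a*a*b*m*m*r*r*r) + -(1*t*t*t*t*t*a*b*b) + (1*t*t*t*t*t*a*b*b*r) + (1*t*t*t*t*t*a*b*b*m*m) + -(1*t*t*t*t*t*a*b*b*m*m*r) + -(1*t*t*t*t*t*a*a*b*r*r) + (1*t*t*t*t*t*a*a*b*r*r*r) + (1*t*t*t*t*t*a*a*b*m*m*r*r) + -(1*t*t*t*t*t*a*a*b*m*m*r*r*r)).
Definition Ql (m r t a b : R) : R := (-(1*r/(m*m*m*m*m)) + (5*r*r/(2*m*m*m*m*m)) + -(5*r*r*r/(2*m*m*m*m*m)) + (2*r*r*r*r/(m*m*m*m*m)) + -(3*r*r*r*r*r/(2*m*m*m*m*m)) + (1*r*r*r*r*r*r/(2*m*m*m*m*m)) + (5*r/(m*m*m)) + -(15*r*r/(2*m*m*m)) + (19*r*r*r/(2*m*m*m)) + -(9*r*r*r*r/(m*m*m)) + (4*r*r*r*r*r/(m*m*m)) + -(2*r*r*r*r*r*r/(m*m*m)) + -(10*r/(m)) + (7*r*r/(m)) + -(13*r*r*r/(m)) + (16*r*r*r*r/(m)) + -(3*r*r*r*r*r/(m)) + (3*r*r*r*r*r*r/(m)) + (10*m*r) + -(1*m*r*r) + (7*m*r*r*r) + -(14*m*r*r*r*r) + -(2*m*r*r*r*r*r*r) + -(5*m*m*m*r) + -(3*m*m*m*r*r/(2)) + -(1*m*m*m*r*r*r/(2)) + (6*m*m*m*r*r*r*r)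 + (1*m*m*m*r*r*r*r*r/(2)) + (1*m*m*m*r*r*r*r*r*r/(2)) + (1*m*m*m*m*m*r) + (1*m*m*m*m*m*r*r/(2)) + -(1*m*m*m*m*m*r*r*r/(2)) + -(1*m*m*m*m*m*r*r*r*r) + -(2*b*m*m*r) + (4*b*m*m*r*r) + -(2*b*m*m*r*r*r) + (2*b*m*m*m*m*r) + -(2*b*m*m*m*m*r*r) + -(2*a*m*m*r*r) + (4*a*m*m*r*r*r) + -(2*a*m*m*r*r*r*r) + (2*a*m*m*m*m*r*r) + -(2*a*m*m*m*m*r*r*r) + -(1*t*r/(2*m*m*m*m*m*m*m*m)) + (1*t*r*r/(2*m*m*m*m*m*m*m*m)) + (1*t*r*r*r/(4*m*m*m*m*m*m*m*m)) + -(1*t*r*r*r*r/(4*m*m*m*m*m*m*m*m)) + (1*t*r*r*r*r*r/(4*m*m*m*m*m*m*m*m)) + -(1*t*r*r*r*r*r*r/(4*m*m*m*m*m*m*m*m)) + (7*t*r/(2*m*m*m*m*m*m)) + -(3*t*r*r/(2*m*m*m*m*m*m)) + (5*t*r*r*r/(4*m*m*m*m*m*m)) + -(1*t*r*r*r*r/(4*m*m*m*m*m*m)) + -(7*t*r*r*r*r*r/(2*m*m*m*m*m*m)) + (1*t*r*r*r*r*r*r/(2*m*m*m*m*m*m)) + -(21*t*r/(2*m*m*m*m)) + -(1*t*r*r/(2*m*m*m*m)) + -(39*t*r*r*r/(4*m*m*m*m)) + (23*t*r*r*r*r/(4*m*m*m*m)) + (55*t*r*r*r*r*r/(4*m*m*m*m))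 + (5*t*r*r*r*r*r*r/(4*m*m*m*m)) + (35*t*r/(2*m*m)) + (15*t*r*r/(2*m*m)) + (85*t*r*r*r/(4*m*m)) + -(65*t*r*r*r*r/(4*m*m)) + -(25*t*r*r*r*r*r/(m*m)) + -(5*t*r*r*r*r*r*r/(m*m)) + -(35*t*r/(2)) + -(25*t*r*r/(2)) + -(85*t*r*r*r/(4)) + (85*t*r*r*r*r/(4)) + (95*t*r*r*r*r*r/(4)) + (25*t*r*r*r*r*r*r/(4)) + (21*t*m*m*r/(2)) + (19*t*m*m*r*r/(2)) + (39*t*m*m*r*r*r/(4)) + -(59*t*m*m*r*r*r*r/(4)) + -(23*t*m*m*r*r*r*r*r/(2)) + -(7*t*m*m*r*r*r*r*r*r/(2)) + -(7*t*m*m*m*m*r/(2)) + -(7*t*m*m*m*m*r*r/(2)) + -(5*t*m*m*m*m*r*r*r/(4)) + (21*t*m*m*m*m*r*r*r*r/(4)) + (9*t*m*m*m*m*r*r*r*r*r/(4)) + (3*t*m*m*m*m*r*r*r*r*r*r/(4)) + (1*t*m*m*m*m*m*m*r/(2)) + (1*t*m*m*m*m*m*m*r*r/(2)) + -(1*t*m*m*m*m*m*m*r*r*r/(4)) + -(3*t*m*m*m*m*m*m*r*r*r*r/(4)) + -(2*t*b*r/(m)) + (5*t*b*r*r/(m)) + -(4*t*b*r*r*r/(m)) + (1*t*b*r*r*r*r/(m)) + (6*t*b*m*r) + -(10*t*b*m*r*r) + (6*t*b*m*r*r*r) + -(2*t*b*m*r*r*r*r) + -(6*t*b*m*m*m*r)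 + (7*t*b*m*m*m*r*r) + -(2*t*b*m*m*m*r*r*r) + (1*t*b*m*m*m*r*r*r*r) + (2*t*b*m*m*m*m*m*r) + -(2*t*b*m*m*m*m*m*r*r) + -(2*t*a*r/(m)) + (5*t*a*r*r/(m)) + -(4*t*a*r*r*r/(m)) + (1*t*a*r*r*r*r/(m)) + (6*t*a*m*r) + -(9*t*a*m*r*r) + (4*t*a*m*r*r*r) + -(1*t*a*m*r*r*r*r) + -(6*t*a*m*m*m*r) + (3*t*a*m*m*m*r*r) + (2*t*a*m*m*m*r*r*r) + (1*t*a*m*m*m*r*r*r*r) + (2*t*a*m*m*m*m*m*r) + (1*t*a*m*m*m*m*m*r*r) + -(2*t*a*m*m*m*m*m*r*r*r) + -(1*t*a*m*m*m*m*m*r*r*r*r) + -(1*t*t*r*r/(4*m*m*m*m*m*m*m*m*m*m*m)) + (1*t*t*r*r*r/(2*m*m*m*m*m*m*m*m*m*m*m)) + -(1*t*t*r*r*r*r/(2*m*m*m*m*m*m*m*m*m*m*m)) + (1*t*t*r*r*r*r*r/(2*m*m*m*m*m*m*m*m*m*m*m)) + -(1*t*t*r*r*r*r*r*r/(4*m*m*m*m*m*m*m*m*m*m*m)) + (9*t*t*r*r/(4*m*m*m*m*m*m*m*m*m)) + -(5*t*t*r*r*r/(2*m*m*m*m*m*m*m*m*m)) + (17*t*t*r*r*r*r/(4*m*m*m*m*m*m*m*m*m)) + -(5*t*t*r*r*r*r*r/(m*m*m*m*m*m*m*m*m)) + (1*t*t*r*r*r*r*r*r/(m*m*m*m*m*m*m*m*m))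 + -(9*t*t*r*r/(m*m*m*m*m*m*m)) + (7*t*t*r*r*r/(2*m*m*m*m*m*m*m)) + -(31*t*t*r*r*r*r/(2*m*m*m*m*m*m*m)) + (21*t*t*r*r*r*r*r/(m*m*m*m*m*m*m)) + (21*t*t*r*r/(m*m*m*m*m)) + (7*t*t*r*r*r/(2*m*m*m*m*m)) + (63*t*t*r*r*r*r/(2*m*m*m*m*m)) + -(49*t*t*r*r*r*r*r/(m*m*m*m*m)) + -(7*t*t*r*r*r*r*r*r/(m*m*m*m*m)) + -(63*t*t*r*r/(2*m*m*m)) + -(35*t*t*r*r*r/(2*m*m*m)) + -(77*t*t*r*r*r*r/(2*m*m*m)) + (70*t*t*r*r*r*r*r/(m*m*m)) + (35*t*t*r*r*r*r*r*r/(2*m*m*m)) + (63*t*t*r*r/(2*m)) + (49*t*t*r*r*r/(2*m)) + (28*t*t*r*r*r*r/(m)) + -(63*t*t*r*r*r*r*r/(m)) + -(21*t*t*r*r*r*r*r*r/(m)) + -(21*t*t*m*r*r) + -(35*t*t*m*r*r*r/(2)) + -(21*t*t*m*r*r*r*r/(2)) + (35*t*t*m*r*r*r*r*r) + (14*t*t*m*r*r*r*r*r*r) + (9*t*t*m*m*m*r*r) + (13*t*t*m*m*m*r*r*r/(2)) + (1*t*t*m*m*m*r*r*r*r/(2)) + -(11*t*t*m*m*m*r*r*r*r*r) + -(5*t*t*m*m*m*r*r*r*r*r*r) + -(9*t*t*m*m*m*m*m*r*r/(4)) + -(1*t*t*m*m*m*m*m*r*r*r) + (1*t*t*m*m*m*m*m*r*r*r*r)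 + (3*t*t*m*m*m*m*m*r*r*r*r*r/(2)) + (3*t*t*m*m*m*m*m*r*r*r*r*r*r/(4)) + (1*t*t*m*m*m*m*m*m*m*r*r/(4)) + -(1*t*t*m*m*m*m*m*m*m*r*r*r*r/(4)) + -(1*t*t*b/(m*m*m*m)) + (3*t*t*b*r/(2*m*m*m*m)) + -(3*t*t*b*r*r/(2*m*m*m*m)) + (5*t*t*b*r*r*r/(2*m*m*m*m)) + -(3*t*t*b*r*r*r*r/(2*m*m*m*m)) + (5*t*t*b/(m*m)) + -(3*t*t*b*r/(2*m*m)) + (9*t*t*b*r*r/(2*m*m)) + -(11*t*t*b*r*r*r/(m*m)) + (3*t*t*b*r*r*r*r/(m*m)) + -(10*t*t*b) + -(5*t*t*b*r) + -(3*t*t*b*r*r) + (18*t*t*b*r*r*r) + (10*t*t*b*m*m) + (9*t*t*b*m*m*r) + -(3*t*t*b*m*m*r*r) + -(13*t*t*b*m*m*r*r*r) + -(3*t*t*b*m*m*r*r*r*r) + -(5*t*t*b*m*m*m*m) + -(9*t*t*b*m*m*m*m*r/(2)) + (9*t*t*b*m*m*m*m*r*r/(2)) + (7*t*t*b*m*m*m*m*r*r*r/(2)) + (3*t*t*b*m*m*m*m*r*r*r*r/(2)) + (1*t*t*b*m*m*m*m*m*m) + (1*t*t*b*m*m*m*m*m*m*r/(2)) + -(3*t*t*b*m*m*m*m*m*m*r*r/(2)) + -(2*t*t*a*r/(m*m*m*m)) + (3*t*t*a*r*r/(m*m*m*m)) + -(1*t*t*a*r*r*r/(2*m*m*m*m))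 + (1*t*t*a*r*r*r*r/(2*m*m*m*m)) + -(3*t*t*a*r*r*r*r*r/(2*m*m*m*m)) + (1*t*t*a*r*r*r*r*r*r/(2*m*m*m*m)) + (10*t*t*a*r/(m*m)) + -(9*t*t*a*r*r/(m*m)) + (3*t*t*a*r*r*r/(2*m*m)) + -(9*t*t*a*r*r*r*r/(2*m*m)) + (4*t*t*a*r*r*r*r*r/(m*m)) + -(2*t*t*a*r*r*r*r*r*r/(m*m)) + -(20*t*t*a*r) + (8*t*t*a*r*r) + (12*t*t*a*r*r*r*r) + -(3*t*t*a*r*r*r*r*r) + (3*t*t*a*r*r*r*r*r*r) + (20*t*t*a*m*m*r) + -(4*t*t*a*m*m*r*r*r) + -(14*t*t*a*m*m*r*r*r*r) + -(2*t*t*a*m*m*r*r*r*r*r*r) + -(10*t*t*a*m*m*m*m*r) + -(3*t*t*a*m*m*m*m*r*r) + (9*t*t*a*m*m*m*m*r*r*r/(2)) + (15*t*t*a*m*m*m*m*r*r*r*r/(2)) + (1*t*t*a*m*m*m*m*r*r*r*r*r/(2)) + (1*t*t*a*m*m*m*m*r*r*r*r*r*r/(2)) + (2*t*t*a*m*m*m*m*m*m*r) + (1*t*t*a*m*m*m*m*m*m*r*r) + -(3*t*t*a*m*m*m*m*m*m*r*r*r/(2)) + -(3*t*t*a*m*m*m*m*m*m*r*r*r*r/(2)) + -(2*t*t*a*b*m*m*m*r) + (4*t*t*a*b*m*m*m*r*r) + -(2*t*t*a*b*m*m*m*r*r*r) + (2*t*t*a*b*m*m*m*m*m*r) + -(2*t*t*a*b*m*m*m*m*m*r*r)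 + (1*t*t*t*r*r*r*r/(2*m*m*m*m*m*m*m*m*m*m*m*m)) + -(1*t*t*t*r*r*r*r*r/(4*m*m*m*m*m*m*m*m*m*m*m*m)) + -(1*t*t*t*r*r*r*r*r*r/(4*m*m*m*m*m*m*m*m*m*m*m*m)) + -(9*t*t*t*r*r*r*r/(2*m*m*m*m*m*m*m*m*m*m)) + (9*t*t*t*r*r*r*r*r/(4*m*m*m*m*m*m*m*m*m*m)) + (9*t*t*t*r*r*r*r*r*r/(4*m*m*m*m*m*m*m*m*m*m)) + (18*t*t*t*r*r*r*r/(m*m*m*m*m*m*m*m)) + -(9*t*t*t*r*r*r*r*r/(m*m*m*m*m*m*m*m)) + -(9*t*t*t*r*r*r*r*r*r/(m*m*m*m*m*m*m*m)) + -(42*t*t*t*r*r*r*r/(m*m*m*m*m*m)) + (21*t*t*t*r*r*r*r*r/(m*m*m*m*m*m)) + (21*t*t*t*r*r*r*r*r*r/(m*m*m*m*m*m)) + (63*t*t*t*r*r*r*r/(m*m*m*m)) + -(63*t*t*t*r*r*r*r*r/(2*m*m*m*m)) + -(63*t*t*t*r*r*r*r*r*r/(2*m*m*m*m)) + -(63*t*t*t*r*r*r*r/(m*m)) + (63*t*t*t*r*r*r*r*r/(2*m*m)) + (63*t*t*t*r*r*r*r*r*r/(2*m*m)) + (42*t*t*t*r*r*r*r) + -(21*t*t*t*r*r*r*r*r) + -(21*t*t*t*r*r*r*r*r*r) + -(18*t*t*t*m*m*r*r*r*r) + (9*t*t*t*m*m*r*r*r*r*r) + (9*t*t*t*m*m*r*r*r*r*r*r)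 + (9*t*t*t*m*m*m*m*r*r*r*r/(2)) + -(9*t*t*t*m*m*m*m*r*r*r*r*r/(4)) + -(9*t*t*t*m*m*m*m*r*r*r*r*r*r/(4)) + -(1*t*t*t*m*m*m*m*m*m*r*r*r*r/(2)) + (1*t*t*t*m*m*m*m*m*m*r*r*r*r*r/(4)) + (1*t*t*t*m*m*m*m*m*m*r*r*r*r*r*r/(4)) + -(1*t*t*t*b/(2*m*m*m*m*m*m*m)) + (1*t*t*t*b*r/(m*m*m*m*m*m*m)) + -(3*t*t*t*b*r*r/(2*m*m*m*m*m*m*m)) + (2*t*t*t*b*r*r*r/(m*m*m*m*m*m*m)) + -(1*t*t*t*b*r*r*r*r/(m*m*m*m*m*m*m)) + (7*t*t*t*b/(2*m*m*m*m*m)) + -(4*t*t*t*b*r/(m*m*m*m*m)) + (11*t*t*t*b*r*r/(m*m*m*m*m)) + -(27*t*t*t*b*r*r*r/(2*m*m*m*m*m)) + (3*t*t*t*b*r*r*r*r/(m*m*m*m*m)) + -(21*t*t*t*b/(2*m*m*m)) + (5*t*t*t*b*r/(m*m*m)) + -(32*t*t*t*b*r*r/(m*m*m)) + (75*t*t*t*b*r*r*r/(2*m*m*m)) + (35*t*t*t*b/(2*m)) + (95*t*t*t*b*r*r/(2*m)) + -(55*t*t*t*b*r*r*r/(m)) + -(10*t*t*t*b*r*r*r*r/(m)) + -(35*t*t*t*b*m/(2)) + -(5*t*t*t*b*m*r) + -(75*t*t*t*b*m*r*r/(2)) + (45*t*t*t*b*m*r*r*r) + (15*t*t*t*b*m*r*r*r*r)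 + (21*t*t*t*b*m*m*m/(2)) + (4*t*t*t*b*m*m*m*r) + (14*t*t*t*b*m*m*m*r*r) + -(39*t*t*t*b*m*m*m*r*r*r/(2)) + -(9*t*t*t*b*m*m*m*r*r*r*r) + -(7*t*t*t*b*m*m*m*m*m/(2)) + -(1*t*t*t*b*m*m*m*m*m*r) + -(1*t*t*t*b*m*m*m*m*m*r*r) + (7*t*t*t*b*m*m*m*m*m*r*r*r/(2)) + (2*t*t*t*b*m*m*m*m*m*r*r*r*r) + (1*t*t*t*b*m*m*m*m*m*m*m/(2)) + -(1*t*t*t*b*m*m*m*m*m*m*m*r*r/(2)) + -(2*t*t*t*b*b) + (4*t*t*t*b*b*r) + -(2*t*t*t*b*b*r*r) + (4*t*t*t*b*b*m*m) + -(6*t*t*t*b*b*m*m*r) + (2*t*t*t*b*b*m*m*r*r) + -(2*t*t*t*b*b*m*m*m*m) + (2*t*t*t*b*b*m*m*m*m*r) + -(1*t*t*t*a*r*r/(m*m*m*m*m*m*m)) + (2*t*t*t*a*r*r*r/(m*m*m*m*m*m*m)) + -(3*t*t*t*a*r*r*r*r/(2*m*m*m*m*m*m*m)) + (1*t*t*t*a*r*r*r*r*r/(m*m*m*m*m*m*m)) + -(1*t*t*t*a*r*r*r*r*r*r/(2*m*m*m*m*m*m*m)) + (7*t*t*t*a*r*r/(m*m*m*m*m)) + -(8*t*t*t*a*r*r*r/(m*m*m*m*m)) + (7*t*t*t*a*r*r*r*r/(m*m*m*m*m)) + -(15*t*t*t*a*r*r*r*r*r/(2*m*m*m*m*m)) +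 (3*t*t*t*a*r*r*r*r*r*r/(2*m*m*m*m*m)) + -(21*t*t*t*a*r*r/(m*m*m)) + (10*t*t*t*a*r*r*r/(m*m*m)) + -(23*t*t*t*a*r*r*r*r/(2*m*m*m)) + (45*t*t*t*a*r*r*r*r*r/(2*m*m*m)) + (35*t*t*t*a*r*r/(m)) + (5*t*t*t*a*r*r*r*r/(m)) + -(35*t*t*t*a*r*r*r*r*r/(m)) + -(5*t*t*t*a*r*r*r*r*r*r/(m)) + -(35*t*t*t*a*m*r*r) + -(10*t*t*t*a*m*r*r*r) + (15*t*t*t*a*m*r*r*r*r/(2)) + (30*t*t*t*a*m*r*r*r*r*r) + (15*t*t*t*a*m*r*r*r*r*r*r/(2)) + (21*t*t*t*a*m*m*m*r*r) + (8*t*t*t*a*m*m*m*r*r*r) + -(11*t*t*t*a*m*m*m*r*r*r*r) + -(27*t*t*t*a*m*m*m*r*r*r*r*r/(2)) + -(9*t*t*t*a*m*m*m*r*r*r*r*r*r/(2)) + -(7*t*t*t*a*m*m*m*m*m*r*r) + -(2*t*t*t*a*m*m*m*m*m*r*r*r) + (11*t*t*t*a*m*m*m*m*m*r*r*r*r/(2)) + (5*t*t*t*a*m*m*m*m*m*r*r*r*r*r/(2)) + (1*t*t*t*a*m*m*m*m*m*r*r*r*r*r*r) + (1*t*t*t*a*m*m*m*m*m*m*m*r*r) + -(1*t*t*t*a*m*m*m*m*m*m*m*r*r*r*r) + -(2*t*t*t*a*b) + (3*t*t*t*a*b*r) + (1*t*t*t*a*b*r*r) + -(3*t*t*t*a*b*r*r*r)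 + (1*t*t*t*a*b*r*r*r*r) + (6*t*t*t*a*b*m*m) + -(5*t*t*t*a*b*m*m*r) + -(5*t*t*t*a*b*m*m*r*r) + (6*t*t*t*a*b*m*m*r*r*r) + -(2*t*t*t*a*b*m*m*r*r*r*r) + -(6*t*t*t*a*b*m*m*m*m) + (1*t*t*t*a*b*m*m*m*m*r) + (7*t*t*t*a*b*m*m*m*m*r*r) + -(3*t*t*t*a*b*m*m*m*m*r*r*r) + (1*t*t*t*a*b*m*m*m*m*r*r*r*r) + (2*t*t*t*a*b*m*m*m*m*m*m) + (1*t*t*t*a*b*m*m*m*m*m*m*r) + -(3*t*t*t*a*b*m*m*m*m*m*m*r*r) + -(2*t*t*t*a*a*r) + (4*t*t*t*a*a*r*r) + -(2*t*t*t*a*a*r*r*r) + (6*t*t*t*a*a*m*m*r) + -(8*t*t*t*a*a*m*m*r*r) + (2*t*t*t*a*a*m*m*r*r*r*r) + -(6*t*t*t*a*a*m*m*m*m*r) + (4*t*t*t*a*a*m*m*m*m*r*r) + (4*t*t*t*a*a*m*m*m*m*r*r*r) + -(2*t*t*t*a*a*m*m*m*m*r*r*r*r) + (2*t*t*t*a*a*m*m*m*m*m*m*r) + -(2*t*t*t*a*a*m*m*m*m*m*m*r*r*r) + (3*t*t*t*t*b*r*r/(2*m*m*m*m*m*m*m*m)) + -(3*t*t*t*t*b*r*r*r/(4*m*m*m*m*m*m*m*m)) + -(3*t*t*t*t*b*r*r*r*r/(4*m*m*m*m*m*m*m*m)) + -(21*t*t*t*t*b*r*r/(2*m*m*m*m*m*m))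 + (21*t*t*t*t*b*r*r*r/(4*m*m*m*m*m*m)) + (21*t*t*t*t*b*r*r*r*r/(4*m*m*m*m*m*m)) + (63*t*t*t*t*b*r*r/(2*m*m*m*m)) + -(63*t*t*t*t*b*r*r*r/(4*m*m*m*m)) + -(63*t*t*t*t*b*r*r*r*r/(4*m*m*m*m)) + -(105*t*t*t*t*b*r*r/(2*m*m)) + (105*t*t*t*t*b*r*r*r/(4*m*m)) + (105*t*t*t*t*b*r*r*r*r/(4*m*m)) + (105*t*t*t*t*b*r*r/(2)) + -(105*t*t*t*t*b*r*r*r/(4)) + -(105*t*t*t*t*b*r*r*r*r/(4)) + -(63*t*t*t*t*b*m*m*r*r/(2)) + (63*t*t*t*t*b*m*m*r*r*r/(4)) + (63*t*t*t*t*b*m*m*r*r*r*r/(4)) + (21*t*t*t*t*b*m*m*m*m*r*r/(2)) + -(21*t*t*t*t*b*m*m*m*m*r*r*r/(4)) + -(21*t*t*t*t*b*m*m*m*m*r*r*r*r/(4)) + -(3*t*t*t*t*b*m*m*m*m*m*m*r*r/(2)) + (3*t*t*t*t*b*m*m*m*m*m*m*r*r*r/(4)) + (3*t*t*t*t*b*m*m*m*m*m*m*r*r*r*r/(4)) + -(1*t*t*t*t*b*b/(m*m*m)) + (2*t*t*t*t*b*b*r/(m*m*m)) + -(1*t*t*t*t*b*b*r*r/(m*m*m)) + (6*t*t*t*t*b*b/(m)) + -(8*t*t*t*t*b*b*r/(m)) + (2*t*t*t*t*b*b*r*r/(m)) + -(12*t*t*t*t*b*b*m) + (12*t*t*t*t*b*b*m*r)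 + (10*t*t*t*t*b*b*m*m*m) + -(8*t*t*t*t*b*b*m*m*m*r) + -(2*t*t*t*t*b*b*m*m*m*r*r) + -(3*t*t*t*t*b*b*m*m*m*m*m) + (2*t*t*t*t*b*b*m*m*m*m*m*r) + (1*t*t*t*t*b*b*m*m*m*m*m*r*r) + (3*t*t*t*t*a*r*r*r*r/(2*m*m*m*m*m*m*m*m)) + -(3*t*t*t*t*a*r*r*r*r*r/(4*m*m*m*m*m*m*m*m)) + -(3*t*t*t*t*a*r*r*r*r*r*r/(4*m*m*m*m*m*m*m*m)) + -(21*t*t*t*t*a*r*r*r*r/(2*m*m*m*m*m*m)) + (21*t*t*t*t*a*r*r*r*r*r/(4*m*m*m*m*m*m)) + (21*t*t*t*t*a*r*r*r*r*r*r/(4*m*m*m*m*m*m)) + (63*t*t*t*t*a*r*r*r*r/(2*m*m*m*m)) + -(63*t*t*t*t*a*r*r*r*r*r/(4*m*m*m*m)) + -(63*t*t*t*t*a*r*r*r*r*r*r/(4*m*m*m*m)) + -(105*t*t*t*t*a*r*r*r*r/(2*m*m)) + (105*t*t*t*t*a*r*r*r*r*r/(4*m*m)) + (105*t*t*t*t*a*r*r*r*r*r*r/(4*m*m)) + (105*t*t*t*t*a*r*r*r*r/(2)) + -(105*t*t*t*t*a*r*r*r*r*r/(4)) + -(105*t*t*t*t*a*r*r*r*r*r*r/(4)) + -(63*t*t*t*t*a*m*m*r*r*r*r/(2)) + (63*t*t*t*t*a*m*m*r*r*r*r*r/(4)) + (63*t*t*t*t*a*m*m*r*r*r*r*r*r/(4))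 + (21*t*t*t*t*a*m*m*m*m*r*r*r*r/(2)) + -(21*t*t*t*t*a*m*m*m*m*r*r*r*r*r/(4)) + -(21*t*t*t*t*a*m*m*m*m*r*r*r*r*r*r/(4)) + -(3*t*t*t*t*a*m*m*m*m*m*m*r*r*r*r/(2)) + (3*t*t*t*t*a*m*m*m*m*m*m*r*r*r*r*r/(4)) + (3*t*t*t*t*a*m*m*m*m*m*m*r*r*r*r*r*r/(4)) + -(2*t*t*t*t*a*b/(m*m*m)) + (4*t*t*t*t*a*b*r/(m*m*m)) + -(4*t*t*t*t*a*b*r*r/(m*m*m)) + (4*t*t*t*t*a*b*r*r*r/(m*m*m)) + -(2*t*t*t*t*a*b*r*r*r*r/(m*m*m)) + (10*t*t*t*t*a*b/(m)) + -(12*t*t*t*t*a*b*r/(m)) + (14*t*t*t*t*a*b*r*r/(m)) + -(16*t*t*t*t*a*b*r*r*r/(m)) + (4*t*t*t*t*a*b*r*r*r*r/(m)) + -(20*t*t*t*t*a*b*m) + (12*t*t*t*t*a*b*m*r) + -(16*t*t*t*t*a*b*m*r*r) + (24*t*t*t*t*a*b*m*r*r*r) + (20*t*t*t*t*a*b*m*m*m) + -(4*t*t*t*t*a*b*m*m*m*r) + (4*t*t*t*t*a*b*m*m*m*r*r) + -(16*t*t*t*t*a*b*m*m*m*r*r*r) + -(4*t*t*t*t*a*b*m*m*m*r*r*r*r) + -(10*t*t*t*t*a*b*m*m*m*m*m) + (4*t*t*t*t*a*b*m*m*m*m*m*r*r) + (4*t*t*t*t*a*b*m*m*m*m*m*r*r*r)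 + (2*t*t*t*t*a*b*m*m*m*m*m*r*r*r*r) + (2*t*t*t*t*a*b*m*m*m*m*m*m*m) + -(2*t*t*t*t*a*b*m*m*m*m*m*m*m*r*r) + -(1*t*t*t*t*a*a*r*r/(m*m*m)) + (2*t*t*t*t*a*a*r*r*r/(m*m*m)) + -(1*t*t*t*t*a*a*r*r*r*r/(m*m*m)) + (5*t*t*t*t*a*a*r*r/(m)) + -(6*t*t*t*t*a*a*r*r*r/(m)) + (1*t*t*t*t*a*a*r*r*r*r/(m)) + -(10*t*t*t*t*a*a*m*r*r) + (6*t*t*t*t*a*a*m*r*r*r) + (4*t*t*t*t*a*a*m*r*r*r*r) + (10*t*t*t*t*a*a*m*m*m*r*r) + -(2*t*t*t*t*a*a*m*m*m*r*r*r) + -(8*t*t*t*t*a*a*m*m*m*r*r*r*r) + -(5*t*t*t*t*a*a*m*m*m*m*m*r*r) + (5*t*t*t*t*a*a*m*m*m*m*m*r*r*r*r) + (1*t*t*t*t*a*a*m*m*m*m*m*m*m*r*r) + -(1*t*t*t*t*a*a*m*m*m*m*m*m*m*r*r*r*r) + (1*t*t*t*t*t*b*b/(m*m*m*m)) + -(1*t*t*t*t*t*b*b*r/(2*m*m*m*m)) + -(1*t*t*t*t*t*b*b*r*r/(2*m*m*m*m)) + -(5*t*t*t*t*t*b*b/(m*m)) + (5*t*t*t*t*t*b*b*r/(2*m*m)) + (5*t*t*t*t*t*b*b*r*r/(2*m*m)) + (10*t*t*t*t*t*b*b) + -(5*t*t*t*t*t*b*b*r) + -(5*t*t*t*t*t*b*b*r*r)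 + -(10*t*t*t*t*t*b*b*m*m) + (5*t*t*t*t*t*b*b*m*m*r) + (5*t*t*t*t*t*b*b*m*m*r*r) + (5*t*t*t*t*t*b*b*m*m*m*m) + -(5*t*t*t*t*t*b*b*m*m*m*m*r/(2)) + -(5*t*t*t*t*t*b*b*m*m*m*m*r*r/(2)) + -(1*t*t*t*t*t*b*b*m*m*m*m*m*m) + (1*t*t*t*t*t*b*b*m*m*m*m*m*m*r/(2)) + (1*t*t*t*t*t*b*b*m*m*m*m*m*m*r*r/(2)) + (4*t*t*t*t*t*a*b*r*r/(m*m*m*m)) + -(2*t*t*t*t*t*a*b*r*r*r/(m*m*m*m)) + -(2*t*t*t*t*t*a*b*r*r*r*r/(m*m*m*m)) + -(20*t*t*t*t*t*a*b*r*r/(m*m)) + (10*t*t*t*t*t*a*b*r*r*r/(m*m)) + (10*t*t*t*t*t*a*b*r*r*r*r/(m*m)) + (40*t*t*t*t*t*a*b*r*r) + -(20*t*t*t*t*t*a*b*r*r*r) + -(20*t*t*t*t*t*a*b*r*r*r*r) + -(40*t*t*t*t*t*a*b*m*m*r*r) + (20*t*t*t*t*t*a*b*m*m*r*r*r) + (20*t*t*t*t*t*a*b*m*m*r*r*r*r) + (20*t*t*t*t*t*a*b*m*m*m*m*r*r) + -(10*t*t*t*t*t*a*b*m*m*m*m*r*r*r) + -(10*t*t*t*t*t*a*b*m*m*m*m*r*r*r*r) + -(4*t*t*t*t*t*a*b*m*m*m*m*m*m*r*r) + (2*t*t*t*t*t*a*b*m*m*m*m*m*m*r*r*r) + (2*t*t*t*t*t*a*b*m*m*m*m*m*m*r*r*r*r)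 + -(2*t*t*t*t*t*a*b*b*m) + (4*t*t*t*t*t*a*b*b*m*r) + -(2*t*t*t*t*t*a*b*b*m*r*r) + (4*t*t*t*t*t*a*b*b*m*m*m) + -(6*t*t*t*t*t*a*b*b*m*m*m*r) + (2*t*t*t*t*t*a*b*b*m*m*m*r*r) + -(2*t*t*t*t*t*a*b*b*m*m*m*m*m) + (2*t*t*t*t*t*a*b*b*m*m*m*m*m*r) + (1*t*t*t*t*t*a*a*r*r*r*r/(m*m*m*m)) + -(1*t*t*t*t*t*a*a*r*r*r*r*r/(2*m*m*m*m)) + -(1*t*t*t*t*t*a*a*r*r*r*r*r*r/(2*m*m*m*m)) + -(5*t*t*t*t*t*a*a*r*r*r*r/(m*m)) + (5*t*t*t*t*t*a*a*r*r*r*r*r/(2*m*m)) + (5*t*t*t*t*t*a*a*r*r*r*r*r*r/(2*m*m)) + (10*t*t*t*t*t*a*a*r*r*r*r) + -(5*t*t*t*t*t*a*a*r*r*r*r*r) + -(5*t*t*t*t*t*a*a*r*r*r*r*r*r) + -(10*t*t*t*t*t*a*a*m*m*r*r*r*r) + (5*t*t*t*t*t*a*a*m*m*r*r*r*r*r) + (5*t*t*t*t*t*a*a*m*m*r*r*r*r*r*r) + (5*t*t*t*t*t*a*a*m*m*m*m*r*r*r*r) + -(5*t*t*t*t*t*a*a*m*m*m*m*r*r*r*r*r/(2)) + -(5*t*t*t*t*t*a*a*m*m*m*m*r*r*r*r*r*r/(2)) + -(1*t*t*t*t*t*a*a*m*m*m*m*m*m*r*r*r*r) + (1*t*t*t*t*t*a*a*m*m*m*m*m*m*r*r*r*r*r/(2))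 + (1*t*t*t*t*t*a*a*m*m*m*m*m*m*r*r*r*r*r*r/(2)) + -(2*t*t*t*t*t*a*a*b*m) + (4*t*t*t*t*t*a*a*b*m*r) + -(2*t*t*t*t*t*a*a*b*m*r*r) + (6*t*t*t*t*t*a*a*b*m*m*m) + -(8*t*t*t*t*t*a*a*b*m*m*m*r) + (2*t*t*t*t*t*a*a*b*m*m*m*r*r*r) + -(6*t*t*t*t*t*a*a*b*m*m*m*m*m) + (4*t*t*t*t*t*a*a*b*m*m*m*m*m*r) + (4*t*t*t*t*t*a*a*b*m*m*m*m*m*r*r) + -(2*t*t*t*t*t*a*a*b*m*m*m*m*m*r*r*r) + (2*t*t*t*t*t*a*a*b*m*m*m*m*m*m*m) + -(2*t*t*t*t*t*a*a*b*m*m*m*m*m*m*m*r*r) + (2*t*t*t*t*t*t*a*b*b) + -(1*t*t*t*t*t*t*a*b*b*r) + -(1*t*t*t*t*t*t*a*b*b*r*r) + -(6*t*t*t*t*t*t*a*b*b*m*m) + (3*t*t*t*t*t*t*a*b*b*m*m*r) + (3*t*t*t*t*t*t*a*b*b*m*m*r*r) + (6*t*t*t*t*t*t*a*b*b*m*m*m*m) + -(3*t*t*t*t*t*t*a*b*b*m*m*m*m*r) + -(3*t*t*t*t*t*t*a*b*b*m*m*m*m*r*r) + -(2*t*t*t*t*t*t*a*b*b*m*m*m*m*m*m) + (1*t*t*t*t*t*t*a*b*b*m*m*m*m*m*m*r) + (1*t*t*t*t*t*t*a*b*b*m*m*m*m*m*m*r*r) + (2*t*t*t*t*t*t*a*a*b*r*r)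 + -(1*t*t*t*t*t*t*a*a*b*r*r*r) + -(1*t*t*t*t*t*t*a*a*b*r*r*r*r) + -(6*t*t*t*t*t*t*a*a*b*m*m*r*r) + (3*t*t*t*t*t*t*a*a*b*m*m*r*r*r) + (3*t*t*t*t*t*t*a*a*b*m*m*r*r*r*r) + (6*t*t*t*t*t*t*a*a*b*m*m*m*m*r*r) + -(3*t*t*t*t*t*t*a*a*b*m*m*m*m*r*r*r) + -(3*t*t*t*t*t*t*a*a*b*m*m*m*m*r*r*r*r) + -(2*t*t*t*t*t*t*a*a*b*m*m*m*m*m*m*r*r) + (1*t*t*t*t*t*t*a*a*b*m*m*m*m*m*m*r*r*r) + (1*t*t*t*t*t*t*a*a*b*m*m*m*m*m*m*r*r*r*r)).

Definition Ns (m r nu x1 xL : R) := nu*(r*r + m*m*x1*xL) + (m*m-1)*x1*xL*(x1+xL).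
Definition Ds (m r nu x1 xL : R) := nu*((r*r)*x1*xL + r*r + (m*m-1)*x1*xL) + (m*m-1)*x1*xL*((r*r)*x1+xL).
Definition Fs (m r nu x1 xL : R) := 2*(r*r)*Ns m r nu x1 xL - (2*r+(r-1)*nu)*Ds m r nu x1 xL.
Definition Nl (m r t x1 xL : R) := (r*r + m*m*x1*xL) + t*(m*m-1)*x1*xL*(x1+xL).
Definition Dl (m r t x1 xL : R) := (r*r*x1*xL + r*r + (m*m-1)*x1*xL) + t*(m*m-1)*x1*xL*(r*r*x1+xL).
Definition Fl (m r t x1 xL : R) := (r+m*m-1)*(r+m*m-1)*2*m*Nl m r t x1 xL
   - (2*m*(m*m)*(r+m*m-1) - (m*m-1)*(m*m-1)*(r-1)*(r+2)*t)*Dl m r t x1 xL.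

Lemma alg_small m r nu x1 xL a b : m <> 0 -> r <> 0 ->
  x1 = 1 - nu/2 + nu*nu*a -> xL = r - nu/2 + nu*nu*b ->
  Fs m r nu x1 xL = nu*nu*Qs m r nu a b.
Proof. intros Hm Hr -> ->. unfold Fs, Ns, Ds, Qs. field. Qed.

Lemma alg_large m r t x1 xL a b : m <> 0 -> r <> 0 ->
  x1 = 1/m + 1*1*((m*m-1)*(m*m-1))/(2*(m*m*(m*m))) * t + t*t*a ->
  xL = r/m + r*r*((m*m-1)*(m*m-1))/(2*(m*m*(m*m))) * t + t*t*b ->
  Fl m r t x1 xL = t*t*Ql m r t a b.
Proof. intros Hm Hr -> ->. unfold Fl, Nl, Dl, Ql. field. auto. Qed.
Ltac bd2 := lazymatch goal with
  | |- Bd (fun _ => ?c) => exact (Bd_const c)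
  | |- Bd (fun x => x) => exact Bd_id
  | |- Bd (fun x => @?A x - @?B x) => refine (Bd_minus A B _ _); [bd2|bd2]
  | |- Bd (fun x => @?A x + @?B x) => refine (Bd_plus A B _ _); [bd2|bd2]
  | |- Bd (fun x => - @?A x) => refine (Bd_opp A _); bd2
  | |- Bd (fun x => @?A x / ?c) => refine (Bd_divc A c _); bd2
  | |- Bd (fun x => @?A x * @?B x) => refine (Bd_mult A B _ _); [bd2|bd2]
  | |- _ => assumption
  end.
Lemma tq m r (A B : R -> R) : Bd A -> Bd B -> Bd (fun t => Qs m r t (A t) (B t)).
Proof. intros. unfold Qs. bd2. Qed.
Lemma tq2 m r (A B : R -> R) : Bd A -> Bd B -> Bd (fun t => Ql m r t (A t) (B t)).
Proof. intros. unfold Ql. bd2. Qed.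

Lemma id_small m r nu x1 xL : 1 < m -> 0 < r -> 0 < nu -> 0 < x1 -> 0 < xL ->
  eps_tilde (m*m) (r*r) x1 xL nu - (1/r + (r-1)/(2*(r*r))*nu)
  = Fs m r nu x1 xL / (2*(r*r)*Ds m r nu x1 xL).
Proof.
  intros Hm Hr Hnu H1 HL.
  assert (0 < m*m-1) by nra.
  assert (Hx : 0 < x1*xL) by nra.
  assert (0 < Ds m r nu x1 xL).
  { unfold Ds. apply Rplus_lt_0_compat; apply Rmult_lt_0_compat; try lra.
    - assert (0 < r*r) by nra. assert (0 < r*r*x1*xL) by nra. assert (0 < (m*m-1)*x1*xL) by nra. lra.
    - apply Rmult_lt_0_compat; nra.
    - nra. }
  assert (0 < nu / (m*m-1) * (r*r + r*r/(x1*xL) + m*m - 1) + r*r*x1 + xL).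
  { assert (0 < r*r/(x1*xL)) by (apply Rdiv_lt_0_compat; nra).
    assert (0 < nu/(m*m-1)) by (apply Rdiv_lt_0_compat; nra). nra. }
  unfold eps_tilde, Fs, Ns, Ds in *.
  field. repeat split; lra.
Qed.

Lemma id_large m r nu x1 xL : 1 < m -> 0 < r -> 0 < nu -> 0 < x1 -> 0 < xL ->
  eps_tilde (m*m) (r*r) x1 xL nu
  - (m*m/(r+m*m-1) - (m*m-1)^2*(r-1)*(r+2)/(2*nu*m*(r+m*m-1)^2))
  = Fl m r (1/nu) x1 xL / (2*m*(r+m*m-1)*(r+m*m-1)*Dl m r (1/nu) x1 xL).
Proof.
  intros Hm Hr Hnu H1 HL.
  assert (0 < m*m-1) by nra.
  assert (Hx : 0 < x1*xL) by nra.
  assert (0 < 1/nu) by (apply Rdiv_lt_0_compat; lra).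
  assert (0 < Dl m r (1/nu) x1 xL).
  { unfold Dl. apply Rplus_lt_0_compat.
    - assert (0 < r*r) by nra. assert (0 < r*r*x1*xL) by nra. assert (0 < (m*m-1)*x1*xL) by nra. lra.
    - apply Rmult_lt_0_compat; [|nra]. assert (0 < 1/nu*(m*m-1)) by (apply Rmult_lt_0_compat; lra). assert (0 < 1/nu*(m*m-1)*x1) by (apply Rmult_lt_0_compat; lra). apply Rmult_lt_0_compat; lra. }
  assert (0 < nu / (m*m-1) * (r*r + r*r/(x1*xL) + m*m - 1) + r*r*x1 + xL).
  { assert (0 < r*r/(x1*xL)) by (apply Rdiv_lt_0_compat; nra).
    assert (0 < nu/(m*m-1)) by (apply Rdiv_lt_0_compat; nra). nra. }
  assert (0 < r + m*m - 1) by nra.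
  unfold eps_tilde, Fl, Nl, Dl in *.
  assert (0 < r*r*x1*xL + r*r + (m*m-1)*x1*xL) by (assert (0 < r*r) by nra; assert (0 < r*r*x1*xL) by nra; assert (0 < (m*m-1)*x1*xL) by nra; lra).
  assert (0 < (m*m-1)*x1*xL*(r*r*x1+xL)) by (apply Rmult_lt_0_compat; nra).
  field. repeat split; try lra. nra.
Qed.

Lemma main (m r : R) (xi1 xiL : R -> R) : 1 < m -> 1 < r ->
  (forall nu, 0 < nu -> 0 < xi1 nu /\ xi_cubic (1/(m*m-1)) 1 nu (xi1 nu) = 0) ->
  (forall nu, 0 < nu -> 0 < xiL nu /\ xi_cubic (1/(m*m-1)) (r*r) nu (xiL nu) = 0) ->
  (exists C delta, 0 < delta /\ forall nu, 0 < nu < delta ->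
     Rabs (eps_tilde (m*m) (r*r) (xi1 nu) (xiL nu) nu - (1/r + (r-1)/(2*(r*r))*nu)) <= C*nu^2) /\
  (exists C M, 0 < M /\ forall nu, M < nu ->
     Rabs (eps_tilde (m*m) (r*r) (xi1 nu) (xiL nu) nu
       - (m*m/(r+m*m-1) - (m*m-1)^2*(r-1)*(r+2)/(2*nu*m*(r+m*m-1)^2))) <= C/nu^2).
Proof.
  intros Hm Hr H1 H2.
  assert (Hm1 : 0 < m*m-1) by nra.
  assert (B1 : forall nu, 0 < nu -> 1/m < xi1 nu < 1).
  { intros nu Hnu. destruct (H1 nu Hnu) as [Hp Hc].
    apply (root_bounds m 1 nu (xi1 nu)); try lra; rewrite Rmult_1_l; exact Hc. }
  assert (BL : forall nu, 0 < nu -> r/m < xiL nu < r).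
  { intros nu Hnu. destruct (H2 nu Hnu) as [Hp Hc].
    apply (root_bounds m r nu (xiL nu)); try lra; exact Hc. }
  assert (Hm0 : 0 < 1/m) by (apply Rdiv_lt_0_compat; lra).
  assert (Hrm0 : 0 < r/m) by (apply Rdiv_lt_0_compat; lra).
  split.
  - pose proof (small_exp m 1 1 xi1 Hm ltac:(lra) ltac:(ring) H1) as Ea.
    pose proof (small_exp m r (r*r) xiL Hm ltac:(lra) eq_refl H2) as Eb.
    set (c := (m*m-1)*((1/m)*(r/m))*(r*r*(1/m))).
    assert (Hc : 0 < c).
    { unfold c. apply Rmult_lt_0_compat; [apply Rmult_lt_0_compat|]; nra. }
    assert (HZ : Bd (fun nu => Qs m r nu ((xi1 nu - 1 + nu/2)/(nu*nu)) ((xiL nu - r + nu/2)/(nu*nu))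
                   / (2*(r*r)*Ds m r nu (xi1 nu) (xiL nu)))).
    { apply (Bd_div _ _ (2*(r*r)*c)).
      - exact (tq m r _ _ Ea Eb).
      - apply Rmult_lt_0_compat; nra.
      - apply Ev_all. intros nu Hnu. destruct (B1 nu Hnu). destruct (BL nu Hnu).
        assert (P1 : (1/m)*(r/m) <= xi1 nu * xiL nu) by (apply Rmult_le_compat; lra).
        assert (P2 : r*r*(1/m) <= r*r*xi1 nu + xiL nu).
        { assert (r*r*(1/m) <= r*r*xi1 nu) by (apply Rmult_le_compat_l; nra). lra. }
        assert (P3 : c <= (m*m-1)*xi1 nu*xiL nu*(r*r*xi1 nu+xiL nu)).
        { replace ((m*m-1)*xi1 nu*xiL nu*(r*r*xi1 nu+xiL nu)) with ((m*m-1)*(xi1 nu*xiL nu)*(r*r*xi1 nu+xiL nu)) by ring.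
          unfold c. apply Rmult_le_compat.
          - apply Rmult_le_pos; [lra|]. apply Rmult_le_pos; lra.
          - apply Rmult_le_pos; [nra|lra].
          - apply Rmult_le_compat_l; lra.
          - lra. }
        assert (P4 : 0 <= nu*((r*r)*xi1 nu*xiL nu + r*r + (m*m-1)*xi1 nu*xiL nu)).
        { apply Rmult_le_pos; [lra|]. assert (0 < xi1 nu * xiL nu) by nra.
          assert (0 <= (r*r)*xi1 nu*xiL nu) by (rewrite Rmult_assoc; apply Rmult_le_pos; nra).
          assert (0 <= (m*m-1)*xi1 nu*xiL nu) by (rewrite Rmult_assoc; apply Rmult_le_pos; nra). nra. }
        unfold Ds. rewrite Rabs_pos_eq; [|nra].
        apply Rmult_le_compat_l; [nra|]. lra. }
    destruct HZ as [C [d [Hd HZ]]].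
    exists C, d. split; auto. intros nu Hnu. specialize (HZ nu Hnu). cbv beta in HZ.
    destruct (B1 nu (proj1 Hnu)). destruct (BL nu (proj1 Hnu)).
    rewrite id_small; try lra.
    rewrite (alg_small m r nu (xi1 nu) (xiL nu) ((xi1 nu - 1 + nu/2)/(nu*nu)) ((xiL nu - r + nu/2)/(nu*nu))); try (field; lra); try lra.
    set (W := Qs m r nu _ _ / _) in HZ.
    replace (nu * nu * Qs m r nu ((xi1 nu - 1 + nu / 2) / (nu * nu)) ((xiL nu - r + nu / 2) / (nu * nu)) /
        (2 * (r * r) * Ds m r nu (xi1 nu) (xiL nu))) with (nu*nu*W) by (unfold W, Rdiv; ring).
    rewrite Rabs_mult, (Rabs_pos_eq (nu*nu)) by nra.
    replace (C*nu^2) with (nu*nu*C) by ring. apply Rmult_le_compat_l; [nra|exact HZ].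
  - pose proof (large_exp m 1 1 xi1 Hm ltac:(lra) ltac:(ring) H1) as Ea.
    pose proof (large_exp m r (r*r) xiL Hm ltac:(lra) eq_refl H2) as Eb.
    assert (HW : 0 < r+m*m-1) by nra.
    set (c := 2*m*(r+m*m-1)*(r+m*m-1)*(r*r)).
    assert (Hc : 0 < c).
    { unfold c. repeat apply Rmult_lt_0_compat; nra. }
    assert (HZ : Bd (fun t => Ql m r t
        ((xi1 (1/t) - 1/m - 1*1*((m*m-1)*(m*m-1))/(2*(m*m*(m*m))) * t)/(t*t))
        ((xiL (1/t) - r/m - r*r*((m*m-1)*(m*m-1))/(2*(m*m*(m*m))) * t)/(t*t))
                   / (2*m*(r+m*m-1)*(r+m*m-1)*Dl m r t (xi1 (1/t)) (xiL (1/t))))).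
    { apply (Bd_div _ _ c).
      - exact (tq2 m r _ _ Ea Eb).
      - exact Hc.
      - apply Ev_all. intros t Ht.
        assert (Ht' : 0 < 1/t) by (apply Rdiv_lt_0_compat; lra).
        destruct (B1 _ Ht'). destruct (BL _ Ht').
        set (x1 := xi1 (1/t)) in *. set (xL := xiL (1/t)) in *.
        assert (0 < x1*xL) by nra.
        assert (0 <= r*r*x1*xL) by (rewrite Rmult_assoc; apply Rmult_le_pos; nra).
        assert (0 <= (m*m-1)*x1*xL) by (rewrite Rmult_assoc; apply Rmult_le_pos; nra).
        assert (0 <= t*(m*m-1)*x1*xL*(r*r*x1+xL)).
        { apply Rmult_le_pos; [|nra]. rewrite !Rmult_assoc. apply Rmult_le_pos; [lra|]. 
          apply Rmult_le_pos; [lra|]. nra. }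
        assert (r*r <= Dl m r t x1 xL) by (unfold Dl; lra).
        assert (0 < 2*m*(r+m*m-1)*(r+m*m-1)) by (repeat apply Rmult_lt_0_compat; nra).
        unfold c. rewrite Rabs_pos_eq; [|nra].
        apply Rmult_le_compat_l; lra. }
    destruct HZ as [C [d [Hd HZ]]].
    exists C, (1/d). split; [apply Rdiv_lt_0_compat; lra|]. intros nu Hnu.
    assert (Hnu0 : 0 < nu) by (assert (0 < 1/d) by (apply Rdiv_lt_0_compat; lra); lra).
    assert (Ht : 0 < 1/nu < d).
    { split; [apply Rdiv_lt_0_compat; lra|].
      apply (Rmult_lt_reg_l nu); [lra|]. replace (nu*(1/nu)) with 1 by (field; lra).
      apply (Rmult_lt_reg_l (1/d)); [apply Rdiv_lt_0_compat; lra|].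
      replace (1/d*1) with (1/d) by ring. replace (1/d*(nu*d)) with nu by (field; lra). lra. }
    specialize (HZ (1/nu) Ht). cbv beta in HZ.
    replace (1/(1/nu)) with nu in HZ by (field; lra).
    destruct (B1 nu Hnu0). destruct (BL nu Hnu0).
    rewrite id_large; try lra.
    rewrite (alg_large m r (1/nu) (xi1 nu) (xiL nu)
       ((xi1 nu - 1/m - 1*1*((m*m-1)*(m*m-1))/(2*(m*m*(m*m))) * (1/nu))/((1/nu)*(1/nu)))
       ((xiL nu - r/m - r*r*((m*m-1)*(m*m-1))/(2*(m*m*(m*m))) * (1/nu))/((1/nu)*(1/nu))));
       try (field; lra); try lra.
    set (W := Ql m r (1/nu) _ _ / _) in HZ.
    match goal with |- Rabs (?A / ?B) <= _ => replace (A/B) with ((1/nu)*(1/nu)*W) by (unfold W, Rdiv; ring) end.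
    rewrite Rabs_mult, (Rabs_pos_eq ((1/nu)*(1/nu))) by nra.
    replace (C/nu^2) with ((1/nu)*(1/nu)*C) by (field; lra). apply Rmult_le_compat_l; [nra|exact HZ].
Qed.

Theorem theorem2 (lam Lam : R) (xi1 xiL : R -> R) :
  1 < lam -> 1 < Lam ->
  (forall nu, 0 < nu -> 0 < xi1 nu /\ xi_cubic (1 / (lam - 1)) 1 nu (xi1 nu) = 0) ->
  (forall nu, 0 < nu -> 0 < xiL nu /\ xi_cubic (1 / (lam - 1)) Lam nu (xiL nu) = 0) ->
  (exists C delta, 0 < delta /\
     forall nu, 0 < nu < delta ->
       Rabs (eps_tilde lam Lam (xi1 nu) (xiL nu) nu
             - (1 / sqrt Lam + (sqrt Lam - 1) / (2 * Lam) * nu)) <= C * nu ^ 2) /\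
  (exists C M, 0 < M /\
     forall nu, M < nu ->
       Rabs (eps_tilde lam Lam (xi1 nu) (xiL nu) nu
             - (lam / (sqrt Lam + lam - 1)
                - (lam - 1) ^ 2 * (sqrt Lam - 1) * (sqrt Lam + 2)
                  / (2 * nu * sqrt lam * (sqrt Lam + lam - 1) ^ 2))) <= C / nu ^ 2).
Proof.
  intros Hl HL H1 H2.
  assert (Hm : 1 < sqrt lam).
  { rewrite <- sqrt_1. apply sqrt_lt_1_alt. lra. }
  assert (Hr : 1 < sqrt Lam).
  { rewrite <- sqrt_1. apply sqrt_lt_1_alt. lra. }
  assert (Hmm : sqrt lam * sqrt lam = lam) by (apply sqrt_sqrt; lra).
  assert (Hrr : sqrt Lam * sqrt Lam = Lam) by (apply sqrt_sqrt; lra).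
  assert (H1' : forall nu, 0 < nu -> 0 < xi1 nu /\ xi_cubic (1/(sqrt lam * sqrt lam - 1)) 1 nu (xi1 nu) = 0)
    by (rewrite Hmm; exact H1).
  assert (H2' : forall nu, 0 < nu -> 0 < xiL nu /\ xi_cubic (1/(sqrt lam * sqrt lam - 1)) (sqrt Lam * sqrt Lam) nu (xiL nu) = 0)
    by (rewrite Hmm, Hrr; exact H2).
  pose proof (main (sqrt lam) (sqrt Lam) xi1 xiL Hm Hr H1' H2') as M.
  rewrite Hmm, Hrr in M. exact M.
Qed.
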